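(* Let $x\in\mathbb{R}_{>0}$. There is no atomic restaking network $G=(V,S,\sigma,w,\theta,\pi)$ satisfying all three of the following conditions: (1) $\sum_{v\in V}\sigma(v) < x\cdot |S|$; (2) for every service $s\in S$, $\sum_{v\in V} w(v,s)=x$; (3) for every service $s\in S$, in the network $G_1=(V,S_1,\sigma_1,w_1,\theta_1,\pi_1)=G\searrow\{s\}$ obtained when the single service $s$ is Byzantine, every remaining service $s'\in S\setminus\{s\}$ satisfies $\sum_{v\in V} w_1(v,s')=x$.
   Context: A restaking network is a tuple $G=(V,S,\sigma,w,\theta,\pi)$ where $V$ is a finite nonempty set of validators, $S$ is a finite set of services, $\sigma:V\to\mathbb{R}_{>0}$ is the stake, $w:V\times S\to\mathbb{R}_{\ge 0}$ is the allocation with $w(v,s)\le\sigma(v)$ for all $v,s$, $\theta:S\to[0,1]$ is the attack threshold and $\pi:S\to\mathbb{R}_{>0}$ is the attack prize. The network is atomic if $w(v,s)\in\{0,\sigma(v)\}$ for all $v\in V$, $s\in S$. Byzantine transition: for $S^B\subseteq S$, the network $G\searrow S^B=(V,S_1,\sigma_1,w_1,\theta_1,\pi_1)$ is defined by $S_1=S\setminus S^B$, $\sigma_1(v)=\max\bigl(0,\sigma(v)-\sum_{s\in S^B}w(v,s)\bigr)$, $w_1(v,s)=\min(w(v,s),\sigma_1(v))$ for $s\in S_1$, and $\theta_1,\pi_1$ the restrictions of $\theta,\pi$ to $S_1$. *)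

(* Defs.v *)
From HB Require Import structures.
From mathcomp Require Import all_boot all_order all_algebra.
Set Implicit Arguments. Unset Strict Implicit. Unset Printing Implicit Defensive.
Import Order.TTheory GRing.Theory Num.Theory.
Local Open Scope ring_scope.

Definition restaking_network (R : realFieldType) (V S : finType)
  (sigma : V -> R) (w : V -> S -> R) (theta pi : S -> R) : Prop :=
  [/\ (0 < #|V|)%N,
      (forall v, 0 < sigma v),
      (forall v s, 0 <= w v s /\ w v s <= sigma v),
      (forall s, 0 <= theta s /\ theta s <= 1) &
      (forall s, 0 < pi s)].

Definition atomic (R : realFieldType) (V S : finType)
  (sigma : V -> R) (w : V -> S -> R) : Prop :=
  forall v s, w v s = 0 \/ w v s = sigma v.

(* Byzantine transition G \searrow S^B: stake and allocation of the new
   network (the new service set is S minus S^B; theta, pi are restricted). *)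
Definition byz_stake (R : realFieldType) (V S : finType)
  (sigma : V -> R) (w : V -> S -> R) (SB : {set S}) (v : V) : R :=
  Num.max 0 (sigma v - \sum_(s in SB) w v s).

Definition byz_alloc (R : realFieldType) (V S : finType)
  (sigma : V -> R) (w : V -> S -> R) (SB : {set S}) (v : V) (s : S) : R :=
  Num.min (w v s) (byz_stake sigma w SB v).

(* Main.v *)
Require Import Defs.
From HB Require Import structures.
From mathcomp Require Import all_boot all_order all_algebra.
Import Order.TTheory GRing.Theory Num.Theory.
Local Open Scope ring_scope.

Lemma alloc_eq (R : realFieldType) (V S : finType)
  (sigma : V -> R) (w : V -> S -> R) (theta pi : S -> R) v s s' :
  restaking_network sigma w theta pi -> atomic sigma w ->
  byz_alloc sigma w [set s] v s' = if w v s == 0 then w v s' else 0.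
Proof.
case=> _ Hs Hw _ _ Ha.
rewrite /byz_alloc /byz_stake big_set1.
have [h0 h1] := Hw v s'.
have := Hs v.
case: (Ha v s) => ->; rewrite ?eqxx ?subr0 ?subrr.
  move=> hs; rewrite (max_idPr (ltW hs)); exact: (min_idPl h1).
move=> hs; rewrite (gt_eqF hs) maxxx; exact: (min_idPr h0).
Qed.

Theorem mainTheorem1 (R : realFieldType) (V S : finType)
  (sigma : V -> R) (w : V -> S -> R) (theta pi : S -> R) (x : R) :
  0 < x ->
  restaking_network sigma w theta pi ->
  atomic sigma w ->
  ~ [/\ \sum_(v : V) sigma v < x * #|S|%:R,
        (forall s : S, \sum_(v : V) w v s = x) &
        (forall s s' : S, s' != s ->
           \sum_(v : V) byz_alloc sigma w [set s] v s' = x)].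
Proof.
move=> xpos Hn Ha [Hlt Hsum Hbyz].
have Hn' := Hn; case: Hn' => _ Hs Hw _ _.
have disj : forall v s s', s' != s -> w v s = 0 \/ w v s' = 0.
  move=> v s s' ne.
  have E : \sum_(u : V) (if w u s == 0 then w u s' else 0) = x.
    by rewrite -(Hbyz s s' ne); apply: eq_bigr => u _; rewrite (@alloc_eq _ _ _ _ _ _ _ u s s' Hn Ha).
  have : \sum_(u : V) (if w u s == 0 then 0 else w u s') = 0.
    have : \sum_(u : V) w u s' = \sum_(u : V) (if w u s == 0 then w u s' else 0)
               + \sum_(u : V) (if w u s == 0 then 0 else w u s').
      rewrite -big_split /=; apply: eq_bigr => u _; case: ifP => _;
        by rewrite ?addr0 ?add0r.
    by rewrite E Hsum => h; apply: (addrI x); rewrite addr0 -h.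
  move/eqP; rewrite psumr_eq0; last first.
    by move=> u _; case: ifP => // _; case: (Hw u s').
  move/allP/(_ v (mem_index_enum _)) => /=; case: (w v s =P 0) => [h _|_ /eqP h]; [left|right]; exact: h.
have Hv : forall v, \sum_(s : S) w v s <= sigma v.
  move=> v.
  case: (pickP (fun s => w v s != 0)) => [s0 /negbTE h0|hn].
    rewrite (bigD1 s0) //= big1 ?addr0; first by case: (Hw v s0).
    move=> s ns; case: (disj v s0 s ns) => // /eqP; by rewrite h0.
  rewrite big1; first exact: ltW (Hs v).
  by move=> s _; move: (hn s) => /negbFE /eqP.
have : x * #|S|%:R <= \sum_(v : V) sigma v.
  apply: le_trans (ler_sum _ (fun v _ => Hv v)).
  rewrite exchange_big /= (eq_bigr (fun _ => x)) ?sumr_const; last by move=> s _; exact: Hsum.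
  by rewrite mulr_natr.
by rewrite leNgt Hlt.
Qed.
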